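(* Let $k$ be an $\mathbf{F}_p$-algebra, $m\in\mathbf{N}\cup\{\infty\}$, $A:=k[[\pi]]/(\pi^{m+1})$, and let $\phi:A\to\operatorname{HS}^m(k)[[\pi]]/(\pi^{m+1})$ be the ring homomorphism $\phi(\sum_ia_i\pi^i)=\sum_{n=0}^m\sum_{i=0}^nd^{[n-i]}a_i\,\pi^n$. Let $\overline{\phi}:\operatorname{HS}^m(A)\to\operatorname{HS}^m(k)$ be its transpose, i.e. the ring homomorphism with $\overline{\phi}(d^{[n]}a)$ equal to the coefficient of $\pi^n$ in $\phi(a)$. Let $\iota:\operatorname{HS}^m(k)\to\operatorname{HS}^m(A)$ be induced by $k\subset A$, let $J$ be the ideal of $\operatorname{HS}^m(A)$ generated by $d^{[n]}\pi^i-\delta_{ni}$ ($0\le n\le m$, $i\ge0$), and $\rho:\operatorname{HS}^m(k)\to\operatorname{HS}^m(A)/J$ the composite of $\iota$ with the quotient map. Then $\overline{\phi}\circ\iota=\mathrm{id}$, $\overline{\phi}$ vanishes on $J$ and so induces $\overline{\phi}^\#:\operatorname{HS}^m(A)/J\to\operatorname{HS}^m(k)$, and $\overline{\phi}^\#\circ\rho=\mathrm{id}$. Hence $\rho$ is injective, and therefore (being surjective) an isomorphism.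
   Context: For a ring $R$ and $m\in\mathbf{N}\cup\{\infty\}$, $\operatorname{HS}^m(R):=\mathbf{Z}[d^{[n]}a\mid a\in R,0\le n\le m]/\sim$, where $\sim$ is generated by $d^{[n]}(a+b)=d^{[n]}a+d^{[n]}b$, $d^{[n]}(ab)=\sum_{i+j=n}d^{[i]}a\,d^{[j]}b$, and $d^{[0]}1=1$; ring homomorphisms $\operatorname{HS}^m(A)\to S$ correspond to ring homomorphisms $A\to S[[\pi]]/(\pi^{m+1})$ via $a\mapsto\sum_nf(d^{[n]}a)\pi^n$. Here $\pi^{\infty+1}:=0$; $\delta_{ni}$ is the Kronecker delta; $a_i\in k$ are the coefficients of $a\in A$. It is known that $\rho$ is surjective. *)

(* Defs.v *)
From mathcomp Require Import all_boot all_algebra.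
Import GRing.Theory.
Local Open Scope ring_scope.

(* m : option nat;  Some M = the natural number M,  None = infinity. *)
Definition le_m (m : option nat) (n : nat) : bool :=
  if m is Some M then (n <= M)%N else true.

(* Formal expressions of the free commutative ring Z[d^[n] a | a : T, n : nat]. *)
Inductive hterm (T : Type) : Type :=
  | HVar of T & nat
  | HZero | HOne
  | HAdd of hterm T & hterm T
  | HOpp of hterm T
  | HMul of hterm T & hterm T.
Arguments HZero {T}.
Arguments HOne {T}.
Arguments HVar {T}.
Arguments HAdd {T}.
Arguments HOpp {T}.
Arguments HMul {T}.

Definition hsum {T} (s : seq (hterm T)) : hterm T := foldr (@HAdd T) (@HZero T) s.

Fixpoint hmap {T U : Type} (f : T -> nat -> hterm U) (t : hterm T) : hterm U :=
  match t with
  | HVar a n => f a n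
  | HZero => HZero
  | HOne => HOne
  | HAdd s u => HAdd (hmap f s) (hmap f u)
  | HOpp s => HOpp (hmap f s)
  | HMul s u => HMul (hmap f s) (hmap f u)
  end.

Section HS.
Variables (T : Type) (addT mulT : T -> T -> T) (oneT : T) (m : option nat).
(* extra equations (used to quotient by an ideal) *)
Variable E : hterm T -> hterm T -> Prop.

(* The congruence on hterm T whose quotient is HS^m(T) (modulo E):
   commutative ring axioms + the Hasse–Schmidt relations for 0 <= n <= m;
   generators d^[n] a with n > m are set to 0 (they are not generators of
   HS^m). *)
Inductive hs_eq : hterm T -> hterm T -> Prop :=
  | hs_refl t : hs_eq t t
  | hs_sym s t : hs_eq s t -> hs_eq t s
  | hs_trans s t u : hs_eq s t -> hs_eq t u -> hs_eq s u
  | hs_addC s s' t t' : hs_eq s s' -> hs_eq t t' -> hs_eq (HAdd s t) (HAdd s' t')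
  | hs_oppC s s' : hs_eq s s' -> hs_eq (HOpp s) (HOpp s')
  | hs_mulC s s' t t' : hs_eq s s' -> hs_eq t t' -> hs_eq (HMul s t) (HMul s' t')
  | hs_addA s t u : hs_eq (HAdd s (HAdd t u)) (HAdd (HAdd s t) u)
  | hs_addComm s t : hs_eq (HAdd s t) (HAdd t s)
  | hs_add0 s : hs_eq (HAdd HZero s) s
  | hs_addN s : hs_eq (HAdd (HOpp s) s) HZero
  | hs_mulA s t u : hs_eq (HMul s (HMul t u)) (HMul (HMul s t) u)
  | hs_mulComm s t : hs_eq (HMul s t) (HMul t s)
  | hs_mul1 s : hs_eq (HMul HOne s) s
  | hs_mulDl s t u : hs_eq (HMul (HAdd s t) u) (HAdd (HMul s u) (HMul t u))
  | hs_dadd a b n : le_m m n ->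
      hs_eq (HVar (addT a b) n) (HAdd (HVar a n) (HVar b n))
  | hs_dmul a b n : le_m m n ->
      hs_eq (HVar (mulT a b) n)
            (hsum [seq HMul (HVar a i) (HVar b (n - i)) | i <- iota 0 n.+1])
  | hs_done : hs_eq (HVar oneT 0) HOne
  | hs_dkill a n : ~~ le_m m n -> hs_eq (HVar a n) HZero
  | hs_extra s t : E s t -> hs_eq s t.
End HS.

(* The ring A = k[[pi]]/(pi^(m+1)) as coefficient sequences vanishing beyond m. *)
Section Trunc.
Variables (k : comPzRingType) (m : option nat).

Definition trunc_ok (f : nat -> k) : Prop := forall i, ~~ le_m m i -> f i = 0.
Definition TS : Type := {f : nat -> k | trunc_ok f}.
Definition ts_coef (a : TS) (i : nat) : k := proj1_sig a i.

Lemma ts_mk_ok (f : nat -> k) : trunc_ok (fun i => if le_m m i then f i else 0).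
Proof. by move=> i /negbTE ->. Qed.

Definition ts_mk (f : nat -> k) : TS :=
  exist _ (fun i => if le_m m i then f i else 0) (ts_mk_ok f).

Definition ts_add (a b : TS) : TS := ts_mk (fun i => ts_coef a i + ts_coef b i).
Definition ts_mul (a b : TS) : TS :=
  ts_mk (fun i => \sum_(j < i.+1) ts_coef a j * ts_coef b (i - j)).
Definition ts_one : TS := ts_mk (fun i => (i == 0)%N%:R).
Definition ts_const (c : k) : TS := ts_mk (fun i => if i == 0%N then c else 0).
Definition ts_pipow (j : nat) : TS := ts_mk (fun i => (i == j)%:R).

Definition HSk_eq : hterm k -> hterm k -> Prop :=
  hs_eq k +%R *%R 1 m (fun _ _ => False).
Definition HSA_eq : hterm TS -> hterm TS -> Prop :=
  hs_eq TS ts_add ts_mul ts_one m (fun _ _ => False).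
Definition Jrel (s t : hterm TS) : Prop :=
  exists n i, le_m m n /\ s = HVar (ts_pipow i) n /\
              t = (if n == i then HOne else HZero).
Definition HSAJ_eq : hterm TS -> hterm TS -> Prop :=
  hs_eq TS ts_add ts_mul ts_one m Jrel.

Definition iota_hs : hterm k -> hterm TS := hmap (fun a n => HVar (ts_const a) n).

Definition phibar_gen (a : TS) (n : nat) : hterm k :=
  if le_m m n then hsum [seq HVar (ts_coef a i) (n - i) | i <- iota 0 n.+1]
  else HZero.
Definition phibar : hterm TS -> hterm k := hmap phibar_gen.
End Trunc.

(* Main.v *)
From HB Require Import structures.
Require Import Defs.
From mathcomp Require Import all_boot all_algebra.
From mathcomp Require Import boolp zify.
Set Implicit Arguments. Unset Strict Implicit. Unset Printing Implicit Defensive.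
Import GRing.Theory.
Local Open Scope ring_scope.

Section Quot.
Variables (T : Type) (addT mulT : T -> T -> T) (oneT : T) (m : option nat)
  (E : hterm T -> hterm T -> Prop).
Local Notation R := (hs_eq T addT mulT oneT m E).
Definition Qt : Type := {P : hterm T -> Prop | exists t, P = R t}.
Definition qcls (t : hterm T) : Qt := exist _ (R t) (ex_intro _ t erefl).
Definition qrep (q : Qt) : hterm T := proj1_sig (cid (proj2_sig q)).

Lemma qcls_eq P1 P2 h1 h2 : P1 = P2 -> exist (fun P => exists t, P = R t) P1 h1 = exist _ P2 h2.
Proof. by move=> e; subst; congr exist; apply: Prop_irrelevance. Qed.

Lemma qrepK q : qcls (qrep q) = q.
Proof.
case: q => P hP; rewrite /qrep /=; case: (cid hP) => t ht /=.
by apply: qcls_eq.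
Qed.

Lemma qclsP s t : qcls s = qcls t <-> R s t.
Proof.
split.
  move/(congr1 (@proj1_sig _ _)) => /= H.
  have : R t t by apply: hs_refl.
  by rewrite -H.
move=> hst; apply: qcls_eq; apply: funext => u; apply: propext; split => h.
  by eapply hs_trans; [apply: hs_sym; exact: hst | exact: h].
by eapply hs_trans; [exact: hst | exact: h].
Qed.

Lemma qrep_cls t : R (qrep (qcls t)) t.
Proof. by apply/qclsP; rewrite qrepK. Qed.

Definition qadd a b := qcls (HAdd (qrep a) (qrep b)).
Definition qmul a b := qcls (HMul (qrep a) (qrep b)).
Definition qopp a := qcls (HOpp (qrep a)).
Definition q0 := qcls HZero.
Definition q1 := qcls HOne.

Lemma qaddE s t : qadd (qcls s) (qcls t) = qcls (HAdd s t).
Proof. by apply/qclsP; apply: hs_addC; apply: qrep_cls. Qed.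
Lemma qmulE s t : qmul (qcls s) (qcls t) = qcls (HMul s t).
Proof. by apply/qclsP; apply: hs_mulC; apply: qrep_cls. Qed.
Lemma qoppE s : qopp (qcls s) = qcls (HOpp s).
Proof. by apply/qclsP; apply: hs_oppC; apply: qrep_cls. Qed.

Lemma qaddA : associative qadd.
Proof.
move=> a b c; rewrite -(qrepK a) -(qrepK b) -(qrepK c) !qaddE.
by apply/qclsP; apply: hs_addA.
Qed.
Lemma qaddC : commutative qadd.
Proof.
move=> a b; rewrite -(qrepK a) -(qrepK b) !qaddE.
by apply/qclsP; apply: hs_addComm.
Qed.
Lemma qadd0 : left_id q0 qadd.
Proof. by move=> a; rewrite -(qrepK a) /q0 !qaddE; apply/qclsP; apply: hs_add0. Qed.
Lemma qaddN : left_inverse q0 qopp qadd.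
Proof. by move=> a; rewrite -(qrepK a) /q0 qoppE !qaddE; apply/qclsP; apply: hs_addN. Qed.
Lemma qmulA : associative qmul.
Proof.
move=> a b c; rewrite -(qrepK a) -(qrepK b) -(qrepK c) !qmulE.
by apply/qclsP; apply: hs_mulA.
Qed.
Lemma qmulC : commutative qmul.
Proof.
move=> a b; rewrite -(qrepK a) -(qrepK b) !qmulE.
by apply/qclsP; apply: hs_mulComm.
Qed.
Lemma qmul1 : left_id q1 qmul.
Proof. by move=> a; rewrite -(qrepK a) /q1 !qmulE; apply/qclsP; apply: hs_mul1. Qed.
Lemma qmulDl : left_distributive qmul qadd.
Proof.
move=> a b c; rewrite -(qrepK a) -(qrepK b) -(qrepK c) !(qaddE, qmulE).
by apply/qclsP; apply: hs_mulDl.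
Qed.
End Quot.

HB.instance Definition _ T addT mulT oneT m E := gen_eqMixin (@Qt T addT mulT oneT m E).
HB.instance Definition _ T addT mulT oneT m E := gen_choiceMixin (@Qt T addT mulT oneT m E).
HB.instance Definition _ T addT mulT oneT m E :=
  GRing.isZmodule.Build (@Qt T addT mulT oneT m E)
    (@qaddA T addT mulT oneT m E) (@qaddC T addT mulT oneT m E)
    (@qadd0 T addT mulT oneT m E) (@qaddN T addT mulT oneT m E).
HB.instance Definition _ T addT mulT oneT m E :=
  GRing.Zmodule_isComPzRing.Build (@Qt T addT mulT oneT m E)
    (@qmulA T addT mulT oneT m E) (@qmulC T addT mulT oneT m E)
    (@qmul1 T addT mulT oneT m E) (@qmulDl T addT mulT oneT m E).

Section QuotRing.
Variables (T : Type) (addT mulT : T -> T -> T) (oneT : T) (m : option nat)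
  (E : hterm T -> hterm T -> Prop).
Local Notation Q := (@Qt T addT mulT oneT m E).
Local Notation cls := (@qcls T addT mulT oneT m E).
Local Notation R := (hs_eq T addT mulT oneT m E).

Lemma clsD s t : cls (HAdd s t) = cls s + cls t.
Proof. by rewrite -qaddE. Qed.
Lemma clsM s t : cls (HMul s t) = cls s * cls t.
Proof. by rewrite -qmulE. Qed.
Lemma clsN s : cls (HOpp s) = - cls s.
Proof. by rewrite -qoppE. Qed.
Lemma cls0 : cls HZero = 0. Proof. by []. Qed.
Lemma cls1 : cls HOne = 1. Proof. by []. Qed.
Lemma cls_hsum (l : seq (hterm T)) : cls (hsum l) = \sum_(x <- l) cls x.
Proof. by elim: l => [|x l IH]; rewrite ?big_nil ?big_cons //= clsD IH. Qed.
End QuotRing.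

Section QuotRel.
Variables (T : Type) (addT mulT : T -> T -> T) (oneT : T) (m : option nat)
  (E : hterm T -> hterm T -> Prop).
Local Notation cls := (@qcls T addT mulT oneT m E).

Lemma big_iota_ord (V : nmodType) n (F : nat -> V) :
  \sum_(i <- iota 0 n.+1) F i = \sum_(i < n.+1) F i.
Proof. by rewrite -(big_mkord xpredT). Qed.

Lemma clsVadd a b n : le_m m n ->
  cls (HVar (addT a b) n) = cls (HVar a n) + cls (HVar b n).
Proof. by move=> h; rewrite -clsD; apply/qclsP; apply: hs_dadd. Qed.

Lemma clsVmul a b n : le_m m n ->
  cls (HVar (mulT a b) n) = \sum_(i < n.+1) cls (HVar a i) * cls (HVar b (n - i)).
Proof.
move=> h.
have -> : cls (HVar (mulT a b) n) =
  cls (hsum [seq HMul (HVar a i) (HVar b (n - i)) | i <- iota 0 n.+1]).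
  by apply/qclsP; apply: hs_dmul.
by rewrite cls_hsum big_map big_iota_ord; apply: eq_bigr => i _; rewrite clsM.
Qed.

Lemma clsVone : cls (HVar oneT 0) = 1.
Proof. by apply/qclsP; apply: hs_done. Qed.

Lemma clsVkill a n : ~~ le_m m n -> cls (HVar a n) = 0.
Proof. by move=> h; apply/qclsP; apply: hs_dkill. Qed.
End QuotRel.

Lemma le_m0 m : le_m m 0.
Proof. by case: m. Qed.
Lemma le_m_le m n i : le_m m n -> (i <= n)%N -> le_m m i.
Proof. by case: m => //= M h1 h2; exact: leq_trans h2 h1. Qed.

Lemma simplex (V : nmodType) (h : nat -> nat -> V) N :
  \sum_(i < N) \sum_(j < i.+1) h j (i - j)%N = \sum_(j < N) \sum_(j' < (N - j)%N) h j j'.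
Proof.
elim: N => [|N IH]; first by rewrite !big_ord0.
rewrite big_ord_recr /= IH [RHS]big_ord_recr /= subSnn big_ord1.
rewrite [\sum_(i < N.+1) h i (N - i)%N]big_ord_recr /= subnn addrA; congr (_ + _).
rewrite -big_split /=; apply: eq_bigr => j _.
by rewrite subSn ?big_ord_recr //= ltnW.
Qed.

Lemma simplex_swap (V : nmodType) (G : nat -> nat -> V) M :
  \sum_(a < M.+1) \sum_(b < (M.+1 - a)%N) G a b = \sum_(b < M.+1) \sum_(a < (M.+1 - b)%N) G a b.
Proof.
rewrite -simplex -(simplex (fun b a => G a b)); apply: eq_bigr => i _.
rewrite (reindex_inj rev_ord_inj) /=; apply: eq_bigr => a _.
by rewrite subSS subKn // -ltnS.
Qed.

Lemma conv4 (R : comPzRingType) (A B : nat -> nat -> R) n :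
 \sum_(i < n.+1) \sum_(j < i.+1) \sum_(u < (n - i)%N.+1) A j u * B (i - j)%N (n - i - u)%N
 = \sum_(s < n.+1) (\sum_(j < s.+1) A j (s - j)%N) *
                   (\sum_(j' < (n - s)%N.+1) B j' (n - s - j')%N).
Proof.
have -> : \sum_(s < n.+1) (\sum_(j < s.+1) A j (s - j)%N) *
                   (\sum_(j' < (n - s)%N.+1) B j' (n - s - j')%N) =
  \sum_(s < n.+1) \sum_(j < s.+1) (fun j u => \sum_(j' < (n - (j + u))%N.+1)
       A j u * B j' (n - (j + u) - j')%N) j (s - j)%N.
  apply: eq_bigr => s _; rewrite big_distrl; apply: eq_bigr => j _ /=.
  by rewrite big_distrr subnKC // -ltnS.
rewrite (simplex (fun j u => \sum_(j' < (n - (j + u))%N.+1)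
       A j u * B j' (n - (j + u) - j')%N)).
have -> : \sum_(i < n.+1) \sum_(j < i.+1) \sum_(u < (n - i)%N.+1) A j u * B (i - j)%N (n - i - u)%N
  = \sum_(i < n.+1) \sum_(j < i.+1) (fun j j' => \sum_(u < (n - (j + j'))%N.+1)
       A j u * B j' (n - (j + j') - u)%N) j (i - j)%N.
  apply: eq_bigr => i _; apply: eq_bigr => j _ /=.
  by rewrite subnKC // -ltnS.
rewrite (simplex (fun j j' => \sum_(u < (n - (j + j'))%N.+1)
       A j u * B j' (n - (j + j') - u)%N)); apply: eq_bigr => j _.
have hj : (j <= n)%N by rewrite -ltnS.
rewrite subSn //.
pose Gf a b := A j a * B b (n - j - a - b)%N.
have e x : (x < (n - j).+1)%N -> (n - (j + x)).+1 = ((n - j).+1 - x)%N.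
  by move=> hx; rewrite subnDA subSn // -ltnS.
transitivity (\sum_(b < (n - j)%N.+1) \sum_(a < ((n - j).+1 - b)%N) Gf a b).
  apply: eq_bigr => b _; rewrite e //.
  by apply: eq_bigr => a _; rewrite /Gf subnDA subnAC.
rewrite -simplex_swap; apply: eq_bigr => a _; rewrite e //.
by apply: eq_bigr => b _; rewrite /Gf subnDA.
Qed.

Section Main.
Variables (k : comPzRingType) (m : option nat).
Local Notation Ek := (fun (_ _ : hterm k) => False).
Local Notation ck := (@qcls k +%R *%R 1 m Ek).
Local Notation Dk a n := (ck (HVar a n)).
Local Notation TS := (TS k m).
Local Notation coef := (@ts_coef k m).

Lemma HSkP s t : ck s = ck t -> HSk_eq k m s t.
Proof. by move/qclsP. Qed.
Lemma HSkP' s t : HSk_eq k m s t -> ck s = ck t.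
Proof. by move=> h; apply/qclsP. Qed.

Lemma Dk_add a b n : le_m m n -> Dk (a + b) n = Dk a n + Dk b n.
Proof. exact: clsVadd. Qed.

Lemma Dk0 n : le_m m n -> Dk 0 n = 0.
Proof.
move=> hn; have h : Dk 0 n = Dk 0 n + Dk 0 n by rewrite -Dk_add // addr0.
by have := congr1 (fun z => z - Dk 0 n) h; rewrite /= subrr addrK => <-.
Qed.

Lemma Dk_sum n K (f : 'I_K -> k) : le_m m n ->
  Dk (\sum_(j < K) f j) n = \sum_(j < K) Dk (f j) n.
Proof.
move=> hn; apply: (big_morph (fun x => Dk x n)); last exact: Dk0.
by move=> x y; apply: Dk_add.
Qed.

Lemma Dk_mul a b n : le_m m n ->
  Dk (a * b) n = \sum_(i < n.+1) Dk a i * Dk b (n - i)%N.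
Proof. exact: clsVmul. Qed.

Lemma Dk1 n : le_m m n -> Dk 1 n = if n == 0%N then 1 else 0.
Proof.
elim: n {-2}n (leqnn n) => [|N IH] n.
  by rewrite leqn0 => /eqP -> _; apply: clsVone.
rewrite leq_eqVlt => /orP [/eqP -> hm|]; last by rewrite ltnS; apply: IH.
have h := Dk_mul 1 1 hm; rewrite mulr1 in h.
rewrite big_ord_recl big_ord_recr /= in h.
have b0 x : bump 0 x = x.+1 by [].
rewrite big1 in h; last first.
  move=> i _; have hi := ltn_ord i.
  rewrite /= b0 IH //; first by rewrite mul0r.
  by apply: le_m_le hm _; lia.
move: h; rewrite /= !b0 subn0 subnn clsVone mulr1 mul1r add0r.
move=> h; have := congr1 (fun z => z - Dk 1 N.+1) h; rewrite /= subrr addrK => <-.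
by [].
Qed.

Lemma b0 x : bump 0 x = x.+1. Proof. by []. Qed.

Lemma ts_ext (a b : TS) : (forall i, le_m m i -> coef a i = coef b i) -> a = b.
Proof.
case: a b => [f hf] [g hg] /= H.
have e : f = g.
  apply: funext => i; case hi: (le_m m i); first exact: H.
  by rewrite hf ?hi // hg ?hi.
by subst; congr exist; apply: Prop_irrelevance.
Qed.

Lemma const_add a b : ts_const k m (a + b) = ts_add k m (ts_const k m a) (ts_const k m b).
Proof.
apply: ts_ext => i hi; rewrite /ts_coef /= hi.
by case: (i == 0)%N; rewrite ?addr0.
Qed.

Lemma const_mul a b : ts_const k m (a * b) = ts_mul k m (ts_const k m a) (ts_const k m b).
Proof.
apply: ts_ext => i hi; rewrite /ts_coef /= hi big_ord_recl big1 ?addr0 /=.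
  by rewrite le_m0 subn0 hi; case: i {hi} => [|i] /=; rewrite ?mulr0.
by move=> j _; rewrite b0; case: ifP => _; rewrite mul0r.
Qed.

Lemma const_one : ts_const k m 1 = ts_one k m.
Proof. by apply: ts_ext => i hi; rewrite /ts_coef /= hi; case: (i == 0)%N. Qed.

Lemma hmap_hsum (T U : Type) (f : T -> nat -> hterm U) l :
  hmap f (hsum l) = hsum (map (hmap f) l).
Proof. by elim: l => //= x l ->. Qed.

Lemma iota_wd s t : hs_eq k +%R *%R 1 m Ek s t ->
  hs_eq TS (ts_add k m) (ts_mul k m) (ts_one k m) m (fun _ _ => False)
    (iota_hs k m s) (iota_hs k m t).
Proof.
rewrite /iota_hs; elim => /=.
- by move=> *; apply: hs_refl.
- by move=> s0 t0 _ h; apply: hs_sym.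
- by move=> s0 t0 u _ h1 _ h2; eapply hs_trans; [exact: h1 | exact: h2].
- by move=> *; apply: hs_addC.
- by move=> *; apply: hs_oppC.
- by move=> *; apply: hs_mulC.
- by move=> *; apply: hs_addA.
- by move=> *; apply: hs_addComm.
- by move=> *; apply: hs_add0.
- by move=> *; apply: hs_addN.
- by move=> *; apply: hs_mulA.
- by move=> *; apply: hs_mulComm.
- by move=> *; apply: hs_mul1.
- by move=> *; apply: hs_mulDl.
- by move=> a b n hn; rewrite const_add; apply: hs_dadd.
- move=> a b n hn; rewrite hmap_hsum -map_comp /= const_mul.
  exact: hs_dmul.
- by rewrite const_one; apply: hs_done.
- by move=> a n hn; apply: hs_dkill.
- by [].
Qed.

Lemma ck_pg a n : le_m m n ->
  ck (phibar_gen k m a n) = \sum_(i < n.+1) Dk (coef a i) (n - i)%N.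
Proof. by move=> hn; rewrite /phibar_gen hn cls_hsum big_map big_iota_ord. Qed.

Lemma ck_pg0 a n : ~~ le_m m n -> ck (phibar_gen k m a n) = 0.
Proof. by move=> hn; rewrite /phibar_gen (negbTE hn). Qed.

Lemma phibar_iota t : ck (phibar k m (iota_hs k m t)) = ck t.
Proof.
rewrite /phibar /iota_hs.
elim: t => [a n| | |s IHs t IHt|s IHs|s IHs t IHt] /=;
  rewrite ?clsD ?clsN ?clsM ?IHs ?IHt //.
case hn: (le_m m n); last by rewrite ck_pg0 ?hn // clsVkill ?hn.
rewrite ck_pg // big_ord_recl big1 ?addr0 => [|j _].
  by rewrite /ts_coef /= le_m0 subn0.
rewrite /ts_coef /= b0; case: ifP => _; apply: Dk0; apply: le_m_le hn _; exact: leq_subr.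
Qed.

Lemma phibar_J n i : le_m m n ->
  ck (phibar_gen k m (ts_pipow k m i) n) = ck (if n == i then HOne else HZero).
Proof.
move=> hn; rewrite ck_pg //.
transitivity (\sum_(j < n.+1 | j == i :> nat) Dk 1 (n - j)%N).
  rewrite [RHS]big_mkcond; apply: eq_bigr => j _.
  have hj : (j <= n)%N by rewrite -ltnS.
  rewrite /ts_coef /= (le_m_le hn hj).
  case: (j == i :> nat) => /=; rewrite ?mulr1n ?mulr0n //.
  by apply: Dk0; apply: le_m_le hn _; exact: leq_subr.
have -> : ck (if n == i then HOne else HZero) = if n == i then 1 else 0.
  by case: (n == i).
rewrite (big_ord1_eq _ (fun j => Dk 1 (n - j)%N)); case: ltnP => hi.
  rewrite Dk1; last by apply: le_m_le hn _; exact: leq_subr.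
  have hi2 : (i <= n)%N by rewrite -ltnS.
  by rewrite subn_eq0 eqn_leq hi2 andbT.
by rewrite ltn_eqF // -ltnS.
Qed.


Lemma phibar_wd (E : hterm TS -> hterm TS -> Prop)
  (HE : forall s t, E s t -> ck (phibar k m s) = ck (phibar k m t)) s t :
  hs_eq TS (ts_add k m) (ts_mul k m) (ts_one k m) m E s t ->
  ck (phibar k m s) = ck (phibar k m t).
Proof.
move=> H; move: H HE; rewrite /phibar => H HE; elim: H.
- by [].
- by move=> s0 t0 _ ->.
- by move=> s0 t0 u _ -> _ ->.
- by move=> s0 s' t0 t' _ h1 _ h2; rewrite /= !clsD h1 h2.
- by move=> s0 s' _ h1; rewrite /= !clsN h1.
- by move=> s0 s' t0 t' _ h1 _ h2; rewrite /= !clsM h1 h2.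
- by move=> *; rewrite /= !clsD addrA.
- by move=> *; rewrite /= !clsD addrC.
- by move=> *; rewrite /= !clsD add0r.
- by move=> *; rewrite /= !clsD clsN addNr.
- by move=> *; rewrite /= !clsM mulrA.
- by move=> *; rewrite /= !clsM mulrC.
- by move=> *; rewrite /= !clsM mul1r.
- by move=> *; rewrite /= !clsM !clsD !clsM mulrDl.
- move=> a b n hn; rewrite /= clsD !ck_pg // -big_split; apply: eq_bigr => i _.
  have hi : (i <= n)%N by rewrite -ltnS.
  rewrite /ts_coef /= (le_m_le hn hi) Dk_add //.
  by apply: le_m_le hn _; exact: leq_subr.
- move=> a b n hn; rewrite [LHS]/= ck_pg // hmap_hsum cls_hsum !big_map big_iota_ord.
  pose A j u := Dk (coef a j) u; pose B j u := Dk (coef b j) u.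
  transitivity (\sum_(i < n.+1) \sum_(j < i.+1) \sum_(u < (n - i)%N.+1)
     A j u * B (i - j)%N (n - i - u)%N).
    apply: eq_bigr => i _.
    have hi : (i <= n)%N by rewrite -ltnS.
    have hni : le_m m (n - i)%N by apply: le_m_le hn _; exact: leq_subr.
    rewrite /ts_coef /= (le_m_le hn hi) Dk_sum //.
    by apply: eq_bigr => j _; rewrite Dk_mul.
  rewrite conv4; apply: eq_bigr => i _ /=.
  have hi : (i <= n)%N by rewrite -ltnS.
  have hni : le_m m (n - i)%N by apply: le_m_le hn _; exact: leq_subr.
  by rewrite clsM !ck_pg // (le_m_le hn hi).
- rewrite /= ck_pg ?le_m0 // big_ord1 /ts_coef /= le_m0 subnn /= mulr1n.
  exact: clsVone.
- by move=> a n hn; rewrite /= ck_pg0.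
- by move=> s0 t0 h; apply: HE.
Qed.


Lemma phibar_Jwd s t : HSAJ_eq k m s t -> ck (phibar k m s) = ck (phibar k m t).
Proof.
apply: phibar_wd => s0 t0 [n [i [hn [-> ->]]]].
rewrite /phibar /= phibar_J //; by case: (n == i).
Qed.

Local Notation cj := (@qcls TS (ts_add k m) (ts_mul k m) (ts_one k m) m (Jrel k m)).

Lemma cj_pi i j : le_m m j -> cj (HVar (ts_pipow k m i) j) = if j == i then 1 else 0.
Proof.
move=> hj; have -> : cj (HVar (ts_pipow k m i) j) = cj (if j == i then HOne else HZero).
  by apply/qclsP; apply: hs_extra; exists j, i.
by case: (j == i).
Qed.

Definition tshift (a : TS) : TS := ts_mk k m (fun j => coef a j.+1).

Lemma decomp a : a = ts_add k m (ts_const k m (coef a 0))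
                        (ts_mul k m (ts_pipow k m 1) (tshift a)).
Proof.
apply: ts_ext => i hi; rewrite /ts_coef /= hi.
case: i hi => [|i] hi /=.
  by rewrite big_ord1 /= le_m0 mulr0n mul0r addr0.
rewrite add0r big_ord_recl /= le_m0 mulr0n mul0r add0r.
rewrite big_ord_recl big1 ?addr0 => [|j _]; last first.
  by rewrite !b0 /=; case: ifP => _; rewrite ?mulr0n mul0r.
rewrite !b0 /= (le_m_le hi (isT : (1 <= i.+1)%N)) mulr1n mul1r subSS subn0.
by rewrite (le_m_le hi (leqnSn i)).
Qed.

Lemma surjVar a n : le_m m n ->
  cj (HVar a n) = \sum_(i < n.+1) cj (HVar (ts_const k m (coef a i)) (n - i)%N).
Proof.
elim: n a => [|n IH] a hn.
  rewrite {1}(decomp a) clsVadd // clsVmul // !big_ord1 cj_pi ?le_m0 //=.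
  by rewrite mul0r addr0.
rewrite {1}(decomp a) clsVadd // clsVmul //.
rewrite big_ord_recl cj_pi ?le_m0 //= mul0r add0r.
rewrite big_ord_recl b0 cj_pi /=; last by apply: le_m_le hn _.
rewrite mul1r big1 ?addr0 => [|j _]; last first.
  by rewrite !b0 cj_pi /= ?mul0r //; apply: le_m_le hn _; have := ltn_ord j; lia.
rewrite subSS subn0 IH; last by apply: le_m_le hn _.
rewrite [RHS]big_ord_recl subn0; congr (_ + _); apply: eq_bigr => i _.
have hi : (i <= n)%N by rewrite -ltnS.
by rewrite /ts_coef /= (le_m_le hn (leq_trans hi (leqnSn n))) b0 subSS.
Qed.

Lemma surj u : exists t, cj (iota_hs k m t) = cj u.
Proof.
rewrite /iota_hs.
elim: u => [a n| | |s [t1 h1] t [t2 h2]|s [t1 h1]|s [t1 h1] t [t2 h2]].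
- case hn: (le_m m n); last by exists HZero; rewrite clsVkill ?hn.
  exists (hsum [seq HVar (coef a i) (n - i)%N | i <- iota 0 n.+1]).
  rewrite hmap_hsum cls_hsum -map_comp big_map big_iota_ord surjVar //.
- by exists HZero.
- by exists HOne.
- by exists (HAdd t1 t2); rewrite /= !clsD h1 h2.
- by exists (HOpp t1); rewrite /= !clsN h1.
- by exists (HMul t1 t2); rewrite /= !clsM h1 h2.
Qed.

End Main.

Theorem proposition6p5 (p : nat) (k : comPzRingType) (m : option nat) :
  prime p -> (p%:R : k) = 0 ->
  ((* phibar is a well-defined ring map HS^m(A) -> HS^m(k) *)
      (forall s t, HSA_eq k m s t -> HSk_eq k m (phibar k m s) (phibar k m t)) /\
      (* iota is a well-defined map HS^m(k) -> HS^m(A), and rho into HS^m(A)/J *)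
      (forall s t, HSk_eq k m s t -> HSA_eq k m (iota_hs k m s) (iota_hs k m t)) /\
      (* phibar o iota = id *)
      (forall t, HSk_eq k m (phibar k m (iota_hs k m t)) t) /\
      (* phibar vanishes on J ... *)
      (forall n i, le_m m n ->
         HSk_eq k m (phibar k m (HAdd (HVar (ts_pipow k m i) n)
                                  (HOpp (if n == i then HOne else HZero)))) HZero) /\
      (* ... hence induces phibar# : HS^m(A)/J -> HS^m(k) (and phibar# o rho = id
         is the third item) *)
      (forall s t, HSAJ_eq k m s t -> HSk_eq k m (phibar k m s) (phibar k m t)) /\
      (* rho is injective *)
      (forall s t, HSAJ_eq k m (iota_hs k m s) (iota_hs k m t) -> HSk_eq k m s t) /\
      (* rho is surjective, hence an isomorphism *)
      (forall u, exists t, HSAJ_eq k m (iota_hs k m t) u)).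
Proof.
move=> _ _.
split.
  move=> s t h; apply: HSkP; exact: (phibar_wd (E := fun _ _ => False)) h.
split; first by move=> s t h; exact: iota_wd.
split; first by move=> t; apply: HSkP; exact: phibar_iota.
split.
  move=> n i hn; apply: HSkP; rewrite /phibar /= clsD clsN.
  by rewrite phibar_J //; case: (n == i) => /=; rewrite subrr.
split; first by move=> s t h; apply: HSkP; exact: phibar_Jwd.
split.
  move=> s t h; apply: HSkP; rewrite -(phibar_iota m s) -(phibar_iota m t).
  exact: phibar_Jwd.
move=> u; have [t ht] := surj u; exists t.
by move: ht; move/qclsP.
Qed.
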